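(* $\displaystyle T_2(z)=\sum_{c\ge0}T(2,c)z^c=\frac{1+2z^2-z^3}{1-2z-2z^3+z^4}.$
   Context: A tatami tiling of the $r\times c$ rectangular grid is a tiling by monomers ($1\times1$ tiles) and dimers ($1\times2$ or $2\times1$ tiles) such that no point is a corner of four distinct tiles. $T(r,c)$ denotes the total number of tatami tilings of the $r\times c$ grid (with any number of monomers), with the convention $T(r,0)=1$ (the empty tiling). *)

(* Defs.v *)
From mathcomp Require Import all_boot all_order all_algebra.
Set Implicit Arguments. Unset Strict Implicit. Unset Printing Implicit Defensive.
Import GRing.Theory.

Definition cell (r c : nat) := ('I_r * 'I_c)%type.

Definition adjacent (r c : nat) (x y : cell r c) : bool :=
  ((x.1 == y.1 :> nat) && ((x.2.+1 == y.2 :> nat) || (y.2.+1 == x.2 :> nat))) ||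
  ((x.2 == y.2 :> nat) && ((x.1.+1 == y.1 :> nat) || (y.1.+1 == x.1 :> nat))).

Definition is_tile (r c : nat) (A : {set cell r c}) : bool :=
  (#|A| == 1) || [exists x, exists y, adjacent x y && (A == [set x; y])].

Definition md_tiling (r c : nat) (P : {set {set cell r c}}) : bool :=
  partition P [set: cell r c] && [forall A in P, is_tile A].

(* Tatami condition: no interior grid point is a corner of four distinct
   tiles, i.e. for every 2x2 block of cells x = (i,j), (i,j+1), (i+1,j),
   y = (i+1,j+1), the four cells do not lie in four pairwise distinct tiles. *)
Definition tatami (r c : nat) (P : {set {set cell r c}}) : bool :=
  md_tiling P &&
  [forall x : cell r c, forall y : cell r c,
     ((x.1.+1 == y.1 :> nat) && (x.2.+1 == y.2 :> nat)) ==>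
     ~~ uniq [:: pblock P x; pblock P (x.1, y.2); pblock P (y.1, x.2); pblock P y]].

(* T(r,c): number of tatami tilings of the r x c grid (T(r,0) = 1: only the
   empty tiling). *)
Definition T (r c : nat) : nat := #|[set P : {set {set cell r c}} | tatami P]|.

(* Main.v *)
Require Import Defs.
From mathcomp Require Import all_boot all_order all_algebra.
From mathcomp Require Import zify.
Import GRing.Theory.
Set Implicit Arguments. Unset Strict Implicit. Unset Printing Implicit Defensive.

Definition St := (nat * nat)%type.
Definition states : seq St := [seq (a, b) | a <- iota 0 4, b <- iota 0 4].
Fixpoint words n : seq (seq St) :=
  if n is n'.+1 then [seq y :: w | y <- states, w <- words n'] else [:: [::]].
Definition validS (y : St) := [&& y.1 < 4, y.2 < 4 & (y.1 == 3) == (y.2 == 3)].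
Definition cls (y : St) : nat :=
  if y.1 == 3 then 0 else if (y.1 == 2) && (y.2 == 2) then 4
  else if y.1 == 2 then 2 else if y.2 == 2 then 3 else 1.
Definition compat (k : nat) (y : St) :=
  [&& validS y, (y.1 == 1) == ((k == 2) || (k == 4)),
      (y.2 == 1) == ((k == 3) || (k == 4)) & (k == 1) ==> (y.1 == 3)].
Fixpoint acc (k : nat) (s : seq St) : bool :=
  if s is y :: w then compat k y && acc (cls y) w else k <= 1.
Definition F n k := count (acc k) (words n).

Lemma count_cons_all k (L : seq St) W :
  count (acc k) [seq y :: w | y <- L, w <- W] =
  sumn [seq (if compat k y then count (acc (cls y)) W else 0) | y <- L].
Proof.
elim: L => //= y L IH; rewrite count_cat IH; congr (_ + _).
rewrite count_map; case E: (compat k y).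
  by apply: eq_count => w; rewrite /preim /= E.
rewrite -(count_pred0 W); apply: eq_count => w; by rewrite /preim /= E.
Qed.

Lemma F_S n k : F n.+1 k =
  sumn [seq (if compat k y then F n (cls y) else 0) | y <- states].
Proof. exact: count_cons_all. Qed.

Lemma F0 n : F n.+1 0 = F n 0 + F n 1 + F n 2 + F n 3 + F n 4.
Proof. rewrite F_S /= /cls /=; lia. Qed.
Lemma F1 n : F n.+1 1 = F n 0.
Proof. rewrite F_S /= /cls /=; lia. Qed.
Lemma F2 n : F n.+1 2 = F n 1 + F n 3.
Proof. rewrite F_S /= /cls /=; lia. Qed.
Lemma F3 n : F n.+1 3 = F n 1 + F n 2.
Proof. rewrite F_S /= /cls /=; lia. Qed.
Lemma F4 n : F n.+1 4 = F n 1.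
Proof. rewrite F_S /= /cls /=; lia. Qed.

Lemma Frec n : F n.+4 0 + F n 0 + 2 * F n.+2 0 = 2 * F n.+3 0 + 2 * F n.+1 0 + 2 * F n.+2 0.
Proof.
rewrite !(F0, F1, F2, F3, F4). lia.
Qed.

Lemma Fsmall : [/\ F 0 0 = 1, F 1 0 = 2, F 2 0 = 6 & F 3 0 = 13]%N.
Proof. by split; vm_compute. Qed.

Definition d0 : St := (3, 3).
Definition Rs (x y : St) := compat (cls x) y.
Definition colS (s : seq St) j := nth d0 s j.

Lemma acc_path x s : acc (cls x) s = path Rs x (rcons s d0).
Proof.
elim: s x => [|y s IH] x /=.
  rewrite andbT /Rs /compat /validS /cls /=.
  by case: ifP => _ //; do !case: ifP => //.
by rewrite IH.
Qed.

Lemma Rvalid x y : validS x -> Rs x y =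
  [&& validS y, (y.1 == 1) == (x.1 == 2), (y.2 == 1) == (x.2 == 2) &
      ((x.1 != 3) && (x.1 != 2) && (x.2 != 2)) ==> (y.1 == 3)].
Proof.
case: x => a b; rewrite /validS /Rs /compat /cls /= => /and3P [ha hb hab].
case: a ha hab => [|[|[|[|a]]]] // _; case: b hb => [|[|[|[|b]]]] //.
Qed.

Lemma Rd0 x : Rs x d0 = (cls x <= 1).
Proof. by rewrite /Rs /compat /validS /cls /=; do !case: ifP => //. Qed.

Lemma acc_iff x s : acc (cls x) s <->
  Rs x (colS s 0) /\ (forall j, j < size s -> Rs (colS s j) (colS s j.+1)).
Proof.
elim: s x => [|y w IH] x /=.
  by rewrite /colS /= Rd0; split => [->|[]].
rewrite /Rs in IH *; split.
- case/andP => hxy /IH [h0 hj]; split => // -[|j] hj' //=.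
  by apply: hj.
- case => hxy hj; rewrite hxy /=; apply/IH; split.
    exact: (hj 0).
  by move=> j hjw; apply: (hj j.+1).
Qed.

Definition Fs (s : seq St) :=
 [/\ (forall j, validS (colS s j)),
     (forall j, ((colS s j).1 == 2) = ((colS s j.+1).1 == 1)),
     (forall j, ((colS s j).2 == 2) = ((colS s j.+1).2 == 1)),
     ((colS s 0).1 != 1) && ((colS s 0).2 != 1) &
     (forall j, (colS s j).1 != 3 -> (colS s j).1 != 2 -> (colS s j).2 != 2 ->
        (colS s j.+1).1 == 3)].

Lemma col_default s j : size s <= j -> colS s j = d0.
Proof. by move=> h; rewrite /colS nth_default. Qed.

Lemma accE s : acc 0 s <-> Fs s.
Proof.
have -> : 0 = cls d0 by [].
rewrite acc_iff; split.
- case=> h0 hj.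
  have hv : forall j, validS (colS s j).
    elim=> [|j IH]; first by move: h0; rewrite Rvalid //; case/andP.
    case: (ltnP j (size s)) => hjs.
      by move: (hj j hjs); rewrite Rvalid //; case/andP.
    by rewrite col_default // ltnW.
  have hR : forall j, Rs (colS s j) (colS s j.+1).
    move=> j; case: (ltnP j (size s)) => hjs; first exact: hj.
    by rewrite !col_default // (leq_trans hjs).
  split => //.
  + by move=> j; have := hR j; rewrite Rvalid // => /and4P [_ /eqP -> _ _].
  + by move=> j; have := hR j; rewrite Rvalid // => /and4P [_ _ /eqP -> _].
  + by move: h0; rewrite Rvalid // => /and4P [_ /eqP -> /eqP -> _].
  + move=> j a b e; have := hR j; rewrite Rvalid // => /and4P [_ _ _].
    by rewrite a b e.
- case=> hv h1 h2 /andP [h01 h02] h5; split.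
    by rewrite Rvalid // hv /= (negbTE h01) (negbTE h02).
  move=> j _; rewrite Rvalid // hv -h1 -h2 !eqxx andTb andTb andTb.
  by apply/implyP => /andP [/andP [a b] e]; apply: h5.
Qed.

Lemma ord2_other (a b e : 'I_2) : a != e -> b != e -> a = b.
Proof.
case: a => [[|[|//]] ?]; case: b => [[|[|//]] ?]; case: e => [[|[|//]] ?];
  by rewrite // -!val_eqE //= => _ _; apply/val_inj.
Qed.

Lemma nS1 n : (n.+1 == n) = false. Proof. by elim: n. Qed.
Lemma nS2 n : (n == n.+1) = false. Proof. by elim: n. Qed.
Lemma nS3 n : (n == n.+2) = false. Proof. by elim: n. Qed.
Lemma nS4 n : (n.+2 == n) = false. Proof. by elim: n. Qed.

Section Grid.
Variable c : nat.
Local Notation cellc := (cell 2 c).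

Definition rowk (s : seq St) (i j : nat) : nat :=
  if i == 0 then (colS s j).1 else (colS s j).2.

Definition kd (s : seq St) (x : cellc) : nat := rowk s x.1 x.2.

Definition rel (s : seq St) (x y : cellc) : bool :=
  [|| x == y,
      [&& kd s x == 3, x.2 == y.2 :> nat & x.1 != y.1],
      [&& kd s x == 2, x.1 == y.1 & x.2.+1 == y.2 :> nat] |
      [&& kd s x == 1, x.1 == y.1 & y.2.+1 == x.2 :> nat]].

Lemma cell_eq (x y : cellc) : x.1 = y.1 -> (x.2 = y.2 :> nat) -> x = y.
Proof. by case: x y => [a b] [a' b'] /= -> /val_inj ->. Qed.

Definition kindof (P : {set {set cellc}}) (x : cellc) : nat :=
  if [exists y, (y \in pblock P x) && (y.2 == x.2 :> nat) && (y.1 != x.1)] then 3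
  else if [exists y, (y \in pblock P x) && (y.1 == x.1) && (y.2 == x.2.+1 :> nat)]
  then 2
  else if [exists y, (y \in pblock P x) && (y.1 == x.1) && (y.2.+1 == x.2 :> nat)]
  then 1 else 0.

Definition r0 : 'I_2 := ord0.
Definition r1 : 'I_2 := ord_max.

Definition dec (P : {set {set cellc}}) : seq St :=
  [seq (kindof P (r0, j), kindof P (r1, j)) | j <- enum 'I_c].

Lemma size_dec P : size (dec P) = c.
Proof. by rewrite size_map size_enum_ord. Qed.

Lemma nth_dec P (j : 'I_c) :
  nth d0 (dec P) j = (kindof P (r0, j), kindof P (r1, j)).
Proof. by rewrite (nth_map j) ?size_enum_ord // nth_ord_enum. Qed.

Lemma kd_dec P x : kd (dec P) x = kindof P x.
Proof.
case: x => [i j]; rewrite /kd /rowk /colS /= nth_dec.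
by case: i => [[|[|//]] ?] /=; congr kindof; congr pair; apply: val_inj.
Qed.

Variable s : seq St.
Hypothesis Hs : size s = c.
Hypothesis HF : Fs s.

Lemma rowk_lt i j : rowk s i j < 4.
Proof. case: HF => hv _ _ _ _; have := hv j; rewrite /rowk /validS.
by case/and3P => ? ?; case: ifP. Qed.

Lemma rowk_V i i' j : (rowk s i j == 3) = (rowk s i' j == 3).
Proof. case: HF => hv _ _ _ _; have := hv j; rewrite /rowk /validS.
by case/and3P => _ _ /eqP e; do 2 case: ifP => _ //. Qed.

Lemma rowk_R i j : (rowk s i j == 2) = (rowk s i j.+1 == 1).
Proof. by case: HF => _ h1 h2 _ _; rewrite /rowk; case: ifP. Qed.

Lemma rowk_beyond i j : c <= j -> rowk s i j = 3.
Proof. by move=> h; rewrite /rowk col_default ?Hs //; case: ifP. Qed.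

Lemma rowk_L0 i : rowk s i 0 != 1.
Proof. by case: HF => _ _ _ /andP [a b] _; rewrite /rowk; case: ifP. Qed.

Lemma rowk_T j : rowk s 0 j != 3 -> rowk s 0 j != 2 -> rowk s 1 j != 2 ->
  rowk s 0 j.+1 == 3.
Proof. by case: HF => _ _ _ _ h5; rewrite /rowk /=; apply: h5. Qed.

Lemma rel_sym x y : rel s x y -> rel s y x.
Proof.
rewrite /rel /kd; case/or4P.
- by move/eqP => ->; rewrite eqxx.
- case/and3P => k e n; apply/or4P/Or42/and3P; split.
  + by rewrite (rowk_V _ x.1) -(eqP e).
  + by rewrite eq_sym.
  + by rewrite eq_sym.
- case/and3P => k /eqP e e2; apply/or4P/Or44/and3P; split.
  + by rewrite -(eqP e2) -e -rowk_R.
  + by rewrite e.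
  + by [].
- case/and3P => k /eqP e e2; apply/or4P/Or43/and3P; split.
  + by rewrite -e rowk_R (eqP e2).
  + by rewrite e.
  + by [].
Qed.

Lemma ord2_adj (a b : 'I_2) : a != b -> (a.+1 == b :> nat) || (b.+1 == a :> nat).
Proof. by case: a => [[|[|//]] ?]; case: b => [[|[|//]] ?]; rewrite -val_eqE. Qed.

Lemma rel_refl x : rel s x x.
Proof. by rewrite /rel eqxx. Qed.

Lemma rel_uniq x y z : rel s x y -> rel s x z -> y != x -> z != x -> y = z.
Proof.
rewrite /rel => hy hz ny nz.
move: hy hz; rewrite [x == y]eq_sym [x == z]eq_sym (negbTE ny) (negbTE nz) /=.
case/or3P => /and3P [/eqP k a b]; case/or3P => /and3P [/eqP k' a' b'];
  rewrite k in k' => //.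
- apply: cell_eq; last by rewrite -(eqP a) -(eqP a').
  by apply: (@ord2_other _ _ x.1); rewrite eq_sym.
- by apply: cell_eq; [rewrite -(eqP a) -(eqP a') | rewrite -(eqP b) -(eqP b')].
- apply: cell_eq; first by rewrite -(eqP a) -(eqP a').
  by apply/succn_inj; rewrite (eqP b) (eqP b').
Qed.

Lemma rel_adj x y : rel s x y -> y != x -> adjacent x y.
Proof.
rewrite /rel /adjacent => hy ny; move: hy; rewrite [x == y]eq_sym (negbTE ny) /=.
case/or3P => /and3P [_ a b].
- by rewrite a ord2_adj ?orbT.
- by rewrite (eqP a) eqxx b.
- by rewrite (eqP a) eqxx b orbT.
Qed.

Lemma rel_trans x y z : rel s x y -> rel s x z = rel s y z.
Proof.
move=> hxy; have [<-|nyx] := eqVneq y x; first by [].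
apply/idP/idP => h.
- have [->|nzx] := eqVneq z x; first exact: rel_sym.
  by rewrite (rel_uniq hxy h nyx nzx) rel_refl.
- have [->|nzy] := eqVneq z y; first exact: hxy.
  have hyx := rel_sym hxy.
  by rewrite -(rel_uniq hyx h _ nzy) ?rel_refl // eq_sym.
Qed.

Definition enc := equivalence_partition (rel s) [set: cellc].

Lemma rel_equiv : {in [set: cellc] & &, equivalence_rel (rel s)}.
Proof. move=> x y z _ _ _; split; [exact: rel_refl | exact: rel_trans]. Qed.

Lemma enc_part : partition enc [set: cellc].
Proof. exact: equivalence_partitionP rel_equiv. Qed.

Lemma pb_enc x y : (y \in pblock enc x) = rel s x y.
Proof. by rewrite (pblock_equivalence_partition rel_equiv) ?inE. Qed.

Lemma pb_enc_eq x y : rel s x y -> pblock enc y = pblock enc x.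
Proof.
move=> h; apply: same_pblock; first by case/and3P: enc_part.
by rewrite pb_enc.
Qed.

Lemma enc_tiling : md_tiling enc.
Proof.
rewrite /md_tiling enc_part /=; apply/forallP => A; apply/implyP.
case/imsetP => x _ ->.
case: (pickP (fun y => (y != x) && rel s x y)) => [y /andP [ny hy] | none].
- have -> : [set y0 in [set: cellc] | rel s x y0] = [set x; y].
    apply/setP => z; rewrite !inE /=; apply/idP/idP.
    + move=> hz; have [->|nzx] := eqVneq z x; first by [].
      by rewrite (rel_uniq hz hy nzx ny) eqxx orbT.
    + by case/orP => /eqP ->; rewrite ?rel_refl.
  apply/orP; right; apply/existsP; exists x; apply/existsP; exists y.
  by rewrite rel_adj // eqxx.
- have -> : [set y0 in [set: cellc] | rel s x y0] = [set x].
    apply/setP => z; rewrite !inE /=; apply/idP/idP.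
    + move=> hz; apply/negPn/negP => nzx; have := none z.
      by rewrite nzx hz.
    + by move/eqP ->; rewrite rel_refl.
  by rewrite /is_tile cards1 eqxx.
Qed.

Lemma enc_tatami : tatami enc.
Proof.
rewrite /tatami enc_tiling /=; apply/forallP => x; apply/forallP => y.
apply/implyP => /andP [e1 e2].
have hy1 := ltn_ord y.1.
have [x10 y11] : x.1 = 0 :> nat /\ y.1 = 1 :> nat.
  by move: (nat_of_ord x.1) (nat_of_ord y.1) e1 hy1 => a b /eqP; lia.
have n01 : x.1 != y.1 by rewrite -val_eqE /= x10 y11.
have [k3|n3] := eqVneq (kd s x) 3.
  have h : rel s x (y.1, x.2) by apply/or4P/Or42; rewrite /= k3 n01 !eqxx.
  by rewrite (pb_enc_eq h) /= !inE !eqxx ?orbT ?andbF.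
have [k2|n2] := eqVneq (kd s x) 2.
  have h : rel s x (x.1, y.2) by apply/or4P/Or43; rewrite /= k2 e2 !eqxx.
  by rewrite (pb_enc_eq h) /= !inE !eqxx ?orbT ?andbF.
have [k2'|n2'] := eqVneq (kd s (y.1, x.2)) 2.
  have h : rel s (y.1, x.2) y by apply/or4P/Or43; rewrite /= k2' e2 !eqxx.
  by rewrite (pb_enc_eq h) /= !inE !eqxx ?orbT ?andbF.
have k3' : kd s (x.1, y.2) == 3.
  move: n3 n2 n2'; rewrite /kd /= x10 y11 -(eqP e2); exact: rowk_T.
have h : rel s (x.1, y.2) y by apply/or4P/Or42; rewrite /= k3' n01 !eqxx.
by rewrite (pb_enc_eq h) /= !inE !eqxx ?orbT ?andbF.
Qed.

Definition oth (i : 'I_2) : 'I_2 := if val i == 0 then ord_max else ord0.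
Lemma oth_neq (i : 'I_2) : i != oth i.
Proof. by case: i => [[|[|//]] ?]; rewrite /oth -val_eqE. Qed.

Lemma E3 x : [exists y, (y \in pblock enc x) && (y.2 == x.2 :> nat) && (y.1 != x.1)]
  = (kd s x == 3).
Proof.
apply/existsP/idP.
- case=> y; rewrite pb_enc => /andP [/andP [h a] b]; move: h; rewrite /rel.
  case/or4P => [/eqP e|/and3P [//]|/and3P [_ _ /eqP e]|/and3P [_ _ /eqP e]].
  + by move: b; rewrite e eqxx.
  + by move: a; rewrite -e nS1.
  + by move: a; rewrite -e nS2.
- move=> k; exists (oth x.1, x.2); rewrite pb_enc /= eqxx eq_sym oth_neq andbT.
  by rewrite andbT; apply/or4P/Or42; rewrite /= k oth_neq eqxx.
Qed.

Lemma E2 x : [exists y, (y \in pblock enc x) && (y.1 == x.1) && (y.2 == x.2.+1 :> nat)]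
  = (kd s x == 2).
Proof.
apply/existsP/idP.
- case=> y; rewrite pb_enc => /andP [/andP [h a] b]; move: h; rewrite /rel.
  case/or4P => [/eqP e|/and3P [_ _ n]|/and3P [//]|/and3P [_ _ /eqP e]].
  + by move: b; rewrite e nS2.
  + by move: n; rewrite (eqP a) eqxx.
  + by move: b; rewrite -e nS3.
- move=> k; have hl : x.2.+1 < c.
    rewrite ltnNge; apply/negP => h; move: k; rewrite /kd rowk_R rowk_beyond //.
  exists (x.1, Ordinal hl); rewrite pb_enc /= !eqxx andbT.
  by rewrite andbT; apply/or4P/Or43; rewrite /= k !eqxx.
Qed.

Lemma E1 x : [exists y, (y \in pblock enc x) && (y.1 == x.1) && (y.2.+1 == x.2 :> nat)]
  = (kd s x == 1).
Proof.
apply/existsP/idP.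
- case=> y; rewrite pb_enc => /andP [/andP [h a] b]; move: h; rewrite /rel.
  case/or4P => [/eqP e|/and3P [_ _ n]|/and3P [_ _ /eqP e]|/and3P [//]].
  + by move: b; rewrite e nS1.
  + by move: n; rewrite (eqP a) eqxx.
  + by move: b; rewrite -e nS4.
- move=> k; have hl : x.2.-1 < c := leq_ltn_trans (leq_pred _) (ltn_ord _).
  have hp : 0 < x.2.
    rewrite lt0n; apply/negP => /eqP h; move: k; rewrite /kd h.
    by move/eqP => h1; move: (rowk_L0 x.1); rewrite h1.
  exists (x.1, Ordinal hl); rewrite pb_enc /= !eqxx /=.
  rewrite prednK // eqxx andbT.
  by rewrite andbT; apply/or4P/Or44; rewrite /= k prednK // !eqxx.
Qed.

Lemma kindof_enc x : kindof enc x = kd s x.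
Proof.
rewrite /kindof E3 E2 E1.
have := rowk_lt x.1 x.2; rewrite -/(kd s x).
by case: (kd s x) => [|[|[|[|]]]].
Qed.

Lemma dec_enc : dec enc = s.
Proof.
apply: (@eq_from_nth _ d0); rewrite ?size_dec ?Hs // => j hj.
rewrite (nth_dec enc (Ordinal hj)) !kindof_enc /kd /rowk /colS /=.
by case: (nth d0 s j).
Qed.

End Grid.

Section Dec.
Variable c : nat.
Local Notation cellc := (cell 2 c).
Variable P : {set {set cellc}}.
Hypothesis HP : md_tiling P.

Lemma adj_sym (x y : cellc) : adjacent x y = adjacent y x.
Proof.
rewrite /adjacent (eq_sym (nat_of_ord x.1)) (eq_sym (nat_of_ord x.2)).
by rewrite [(x.2.+1 == _) || _]orbC [(x.1.+1 == _) || _]orbC.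
Qed.

Lemma tile2 (B : {set cellc}) x y : is_tile B -> x \in B -> y \in B -> y != x ->
  adjacent x y /\ (forall z, z \in B -> z != x -> z = y).
Proof.
case/orP.
  case/cards1P => a -> /set1P -> /set1P ->; by rewrite eqxx.
case/existsP => a /existsP [b /andP [ab /eqP ->]].
rewrite !inE => /orP [] /eqP -> /orP [] /eqP -> //; rewrite ?eqxx // => _.
- split => // z; rewrite !inE => /orP [] /eqP -> //; by rewrite eqxx.
- split; first by rewrite adj_sym.
  by move=> z; rewrite !inE => /orP [] /eqP -> //; rewrite eqxx.
Qed.

Lemma HPpart : partition P [set: cellc].
Proof. by case/andP: HP. Qed.

Lemma T1 x : x \in pblock P x.
Proof. by case/and3P: HPpart => /eqP cov _ _; rewrite mem_pblock cov inE. Qed.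

Lemma Ttile x : is_tile (pblock P x).
Proof.
case/andP: HP => /and3P [/eqP cov _ _] /forallP h.
by apply: (implyP (h _)); apply: pblock_mem; rewrite cov inE.
Qed.

Lemma Tuniq x y z : y \in pblock P x -> z \in pblock P x -> y != x -> z != x -> z = y.
Proof. by move=> hy hz ny nz; case: (tile2 (Ttile x) (T1 x) hy ny) => _; apply. Qed.

Lemma Tadj x y : y \in pblock P x -> y != x -> adjacent x y.
Proof. by move=> hy ny; case: (tile2 (Ttile x) (T1 x) hy ny). Qed.

Lemma pb_sym x y : (y \in pblock P x) = (x \in pblock P y).
Proof.
have eqi := pblock_equivalence HPpart.
have [a b] := eqi x y x (in_setT _) (in_setT _) (in_setT _).
have [a' b'] := eqi y x y (in_setT _) (in_setT _) (in_setT _).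
apply/idP/idP => h.
- by rewrite -(b h) a.
- by rewrite -(b' h) a'.
Qed.

Lemma neq_of1 (x z : cellc) : z.1 != x.1 -> z != x.
Proof. by apply: contraNneq => ->. Qed.
Lemma neq_of2 (x z : cellc) : (z.2 != x.2 :> nat) -> z != x.
Proof. by apply: contraNneq => ->. Qed.

Lemma M x y : (y \in pblock P x) = rel (dec P) x y.
Proof.
apply/idP/idP.
- move=> hy; have [<-|nyx] := eqVneq y x; first exact: rel_refl.
  have := Tadj hy nyx; rewrite /adjacent; case/orP => /andP [a b].
  + have a' : x.1 = y.1 := ord_inj (eqP a).
    have f3 : [exists z, (z \in pblock P x) && (z.2 == x.2 :> nat) && (z.1 != x.1)] = false.
      apply/existsP => -[z /andP [/andP [hz e] n]].
      have zy := Tuniq hy hz nyx (neq_of1 n).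
      by move: n; rewrite zy a' eqxx.
    case/orP: b => /eqP b.
    * have k : kindof P x = 2.
        rewrite /kindof f3; case: existsP => // H; exfalso; apply: H; exists y.
        by rewrite hy a' eqxx b eqxx.
      by apply/or4P/Or43; rewrite kd_dec k a' b !eqxx.
    * have k : kindof P x = 1.
        rewrite /kindof f3; case: existsP => [[z /andP [/andP [hz e] n]]|_].
          have nz : z != x by apply: neq_of2; rewrite (eqP n) nS1.
          have zy := Tuniq hy hz nyx nz.
          by move: n; rewrite zy -b nS3.
        case: existsP => // H; exfalso; apply: H; exists y.
        by rewrite hy a' eqxx b eqxx.
      by apply/or4P/Or44; rewrite kd_dec k a' b !eqxx.
    have n : x.1 != y.1.
      by apply: contraNneq nyx => e; apply/eqP; apply: cell_eq; rewrite ?e ?(eqP a).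
    have k : kindof P x = 3.
      rewrite /kindof; case: existsP => // H; exfalso; apply: H; exists y.
      by rewrite hy eq_sym a eq_sym n.
    by apply/or4P/Or42; rewrite kd_dec k a n eqxx.
- rewrite /rel kd_dec /kindof.
  case/or4P => [/eqP <-|/and3P [k a b]|/and3P [k a b]|/and3P [k a b]].
  + exact: T1.
  + move: k; case: existsP => [[z /andP [/andP [hz e] n]] _|_]; last by do !case: ifP.
    suff -> : y = z by [].
    apply: cell_eq; last by rewrite (eqP e) (eqP a).
    by apply: (@ord2_other _ _ x.1); rewrite // eq_sym.
  + move: k; case: existsP => [_ //|_].
    case: existsP => [[z /andP [/andP [hz e] n]] _|_]; last by do !case: ifP.
    suff -> : y = z by [].
    by apply: cell_eq; [rewrite (eqP e) (eqP a) | rewrite (eqP n) (eqP b)].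
  + move: k; case: existsP => [_ //|_]; case: existsP => [_ //|_].
    case: existsP => [[z /andP [/andP [hz e] n]] _|_ //].
    suff -> : y = z by [].
    apply: cell_eq; first by rewrite (eqP e) (eqP a).
    by apply/succn_inj; rewrite (eqP n) (eqP b).
Qed.

Lemma relsym (x y : cellc) : rel (dec P) x y = rel (dec P) y x.
Proof. rewrite -!M; exact: pb_sym. Qed.

Lemma relV (x y : cellc) : rel (dec P) x y -> y.1 != x.1 -> kd (dec P) x == 3.
Proof.
rewrite /rel => h n; case/or4P: h => [/eqP e|/and3P [//]|/and3P [_ a _]|/and3P [_ a _]].
- by move: n; rewrite e eqxx.
- by move: n; rewrite (eqP a) eqxx.
- by move: n; rewrite (eqP a) eqxx.
Qed.

Lemma relR (x y : cellc) : rel (dec P) x y -> (y.2 == x.2.+1 :> nat) -> kd (dec P) x == 2.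
Proof.
rewrite /rel => h n; case/or4P: h => [/eqP e|/and3P [_ a _]|/and3P [//]|/and3P [_ _ a]].
- by move: n; rewrite e nS2.
- by move: n; rewrite -(eqP a) nS2.
- by move: n; rewrite -(eqP a) nS3.
Qed.

Lemma relL (x y : cellc) : rel (dec P) x y -> (y.2.+1 == x.2 :> nat) -> kd (dec P) x == 1.
Proof.
rewrite /rel => h n; case/or4P: h => [/eqP e|/and3P [_ a _]|/and3P [_ _ a]|/and3P [//]].
- by move: n; rewrite e nS1.
- by move: n; rewrite -(eqP a) nS1.
- by move: n; rewrite -(eqP a) nS4.
Qed.

Lemma relD (x y : cellc) : rel (dec P) x y -> y.1 != x.1 -> (y.2 != x.2 :> nat) -> False.
Proof.
rewrite /rel => h n m; case/or4P: h => [/eqP e|/and3P [_ a _]|/and3P [_ a _]|/and3P [_ a _]].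
- by move: n; rewrite e eqxx.
- by move: m; rewrite (eqP a) eqxx.
- by move: n; rewrite (eqP a) eqxx.
- by move: n; rewrite (eqP a) eqxx.
Qed.

Lemma K2 (x : cellc) : (kd (dec P) x == 3) = (kd (dec P) (oth x.1, x.2) == 3).
Proof.
apply/idP/idP => k.
- have h : rel (dec P) x (oth x.1, x.2).
    by apply/or4P/Or42; rewrite /= k oth_neq eqxx.
  apply: (relV (x := (oth x.1, x.2)) (y := x)); first by rewrite relsym.
  by rewrite /= oth_neq.
- have h : rel (dec P) (oth x.1, x.2) x.
    by apply/or4P/Or42; rewrite /= k eq_sym oth_neq eqxx.
  apply: (relV (x := x) (y := (oth x.1, x.2))); first by rewrite relsym.
  by rewrite /= eq_sym oth_neq.
Qed.

Lemma K3 (x y : cellc) : y.1 = x.1 -> (y.2 = x.2.+1 :> nat) ->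
  (kd (dec P) x == 2) = (kd (dec P) y == 1).
Proof.
move=> e1 e2; apply/idP/idP => k.
- have h : rel (dec P) x y by apply/or4P/Or43; rewrite k e1 e2 !eqxx.
  apply: (relL (x := y) (y := x)); first by rewrite relsym.
  by rewrite e2.
- have h : rel (dec P) y x by apply/or4P/Or44; rewrite k e1 e2 !eqxx.
  apply: (relR (x := x) (y := y)); first by rewrite relsym.
  by rewrite e2.
Qed.

Lemma K4 (x : cellc) : (x.2.+1 = c) -> kd (dec P) x != 2.
Proof.
move=> e; rewrite kd_dec /kindof; case: existsP => [_ //|_].
case: existsP => [[z /andP [_ /eqP n]]|_]; last by case: existsP.
by exfalso; move: (ltn_ord z.2); rewrite n e ltnn.
Qed.

Lemma K5 (x : cellc) : (x.2 = 0 :> nat) -> kd (dec P) x != 1.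
Proof.
move=> e; rewrite kd_dec /kindof; case: existsP => [_ //|_].
case: existsP => [_ //|_].
case: existsP => [[z /andP [_ /eqP n]]|_ //].
by exfalso; move: n; rewrite e.
Qed.

Lemma eq_pb (x y : cellc) : (pblock P x == pblock P y) = (y \in pblock P x).
Proof.
case/and3P: HPpart => /eqP cov tI _.
by rewrite eq_pblock // cov inE.
Qed.

Lemma K6 (HT : tatami P) j (hj1 : j.+1 < c) :
  kd (dec P) (r0, Ordinal (ltnW hj1)) != 3 ->
  kd (dec P) (r0, Ordinal (ltnW hj1)) != 2 ->
  kd (dec P) (r1, Ordinal (ltnW hj1)) != 2 ->
  kd (dec P) (r0, Ordinal hj1) == 3.
Proof.
set a := (r0, Ordinal (ltnW hj1)); set b := (r0, Ordinal hj1).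
set c' := (r1, Ordinal (ltnW hj1)); set d := (r1, Ordinal hj1).
move=> n3 n2 n2'; apply/negPn/negP => n3'.
have f1 : ~~ rel (dec P) a b by apply/negP => h; move: n2; rewrite (relR h).
have f2 : ~~ rel (dec P) a c' by apply/negP => h; move: n3; rewrite (relV h).
have f3 : ~~ rel (dec P) a d by apply/negP => h; apply: (relD h); rewrite //= nS1.
have f4 : ~~ rel (dec P) b c' by apply/negP => h; apply: (relD h); rewrite //= nS2.
have f5 : ~~ rel (dec P) b d by apply/negP => h; move: n3'; rewrite (relV h).
have f6 : ~~ rel (dec P) c' d by apply/negP => h; move: n2'; rewrite (relR h).
case/andP: HT => _ /forallP/(_ a) /forallP/(_ d).
rewrite /= eqxx /= => /negP; apply.
by rewrite /= !inE !eq_pb !M (negbTE f1) (negbTE f2) (negbTE f3) (negbTE f4)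
  (negbTE f5) (negbTE f6).
Qed.

Lemma colS_dec j (hj : j < c) :
  colS (dec P) j = (kd (dec P) (r0, Ordinal hj), kd (dec P) (r1, Ordinal hj)).
Proof. by rewrite !kd_dec /colS (nth_dec P (Ordinal hj)). Qed.

Lemma colS_dec_big j : c <= j -> colS (dec P) j = d0.
Proof. by move=> h; rewrite col_default // size_dec. Qed.

Lemma kd_lt (x : cellc) : kd (dec P) x < 4.
Proof. by rewrite kd_dec /kindof; do !case: ifP. Qed.

Lemma Fs_dec (HT : tatami P) : Fs (dec P).
Proof.
split.
- move=> j; case: (ltnP j c) => hj; last by rewrite colS_dec_big.
  by rewrite colS_dec /validS /= !kd_lt (K2 (r0, Ordinal hj)) /= eqxx.
- move=> j; case: (ltnP j.+1 c) => h.
    by rewrite (colS_dec (ltnW h)) (colS_dec h) /=; apply: K3.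
  case: (ltnP j c) => hj; last by rewrite !colS_dec_big // ltnW.
  have e : j.+1 = c by apply/eqP; rewrite eqn_leq h hj.
  by rewrite (colS_dec hj) colS_dec_big //= (negbTE (K4 (x := (r0, Ordinal hj)) e)).
- move=> j; case: (ltnP j.+1 c) => h.
    by rewrite (colS_dec (ltnW h)) (colS_dec h) /=; apply: K3.
  case: (ltnP j c) => hj; last by rewrite !colS_dec_big // ltnW.
  have e : j.+1 = c by apply/eqP; rewrite eqn_leq h hj.
  by rewrite (colS_dec hj) colS_dec_big //= (negbTE (K4 (x := (r1, Ordinal hj)) e)).
- case: (ltnP 0 c) => h; last by rewrite colS_dec_big.
  by rewrite (colS_dec h) /= (K5 (x := (r0, Ordinal h))) // (K5 (x := (r1, Ordinal h))).
- move=> j a b e; case: (ltnP j.+1 c) => h; last by rewrite colS_dec_big.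
  move: a b e; rewrite (colS_dec (ltnW h)) (colS_dec h) /=.
  exact: K6.
Qed.

Lemma enc_dec : enc c (dec P) = P.
Proof.
rewrite -[RHS](equivalence_partition_pblock HPpart) /enc /equivalence_partition.
apply: eq_imset => x; apply/setP => y; by rewrite !inE M.
Qed.

End Dec.

Lemma words_mem n s : (s \in words n) = (size s == n) && all (fun y => y \in states) s.
Proof.
elim: n s => [|n IH] s; first by case: s.
apply/allpairsP/idP.
- case=> -[y w] /= [hy hw ->]; rewrite /= eqSS hy /=.
  by move: hw; rewrite IH.
- case: s => [//|y w] /andP [/= hn /andP [hy hw]].
  exists (y, w); split => //; by rewrite IH -eqSS hn hw.
Qed.

Lemma words_uniq n : uniq (words n).
Proof.
elim: n => [//|n IH]; apply: (allpairs_uniq (f := fun (y : St) w => y :: w)) => //.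
by move=> [a b] [a' b'] _ _ /= [-> ->].
Qed.

Lemma in_states a b : a < 4 -> b < 4 -> (a, b) \in states.
Proof. by move=> ha hb; apply: allpairs_f; rewrite mem_iota. Qed.

Lemma T2F c : T 2 c = F c 0.
Proof.
rewrite /T /F -size_filter cardE.
set A := enum _.
have hA P : (P \in A) = tatami P by rewrite mem_enum inE.
have inj : {in A &, injective (@dec c)}.
  move=> P Q; rewrite !hA => hP hQ e.
  have tP : md_tiling P by case/andP: hP.
  have tQ : md_tiling Q by case/andP: hQ.
  by rewrite -(enc_dec tP) -(enc_dec tQ) e.
rewrite -(size_map (@dec c)); apply: perm_size.
apply: uniq_perm.
- by rewrite map_inj_in_uniq ?enum_uniq.
- by rewrite filter_uniq ?words_uniq.
move=> s; rewrite mem_filter; apply/mapP/idP.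
- case=> P; rewrite hA => hP ->.
  have tP : md_tiling P by case/andP: hP.
  rewrite words_mem size_dec eqxx /=; apply/andP; split.
    by apply/accE; apply: Fs_dec.
  apply/allP => y /mapP [j _ ->].
  by apply: in_states; rewrite -!kd_dec kd_lt.
- case/andP => /accE hF; rewrite words_mem => /andP [/eqP hs _].
  exists (enc c s); last by rewrite dec_enc.
  by rewrite hA enc_tatami.
Qed.

Unset Implicit Arguments.
Local Open Scope ring_scope.

Lemma main (a : nat -> nat)
  (H0 : [/\ a 0%N = 1, a 1%N = 2, a 2%N = 6 & a 3%N = 13]%N)
  (Hr : forall n, (a n.+4 + a n + 2 * a n.+2 = 2 * a n.+3 + 2 * a n.+1 + 2 * a n.+2)%N)
  (n k : nat) : (k < n)%N ->
  ((1 - 2%:R *: 'X - 2%:R *: 'X^3 + 'X^4 : {poly int}) *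
     \poly_(c < n) (a c)%:R)`_k
  = (1 + 2%:R *: 'X^2 - 'X^3 : {poly int})`_k.
Proof.
move=> kn.
rewrite !mulrDl !mulNr mul1r -!scalerAl !coefD !coefN !coefZ coefXM !coefXnM !coef_poly coef1 !coefXn.
case: H0 => h0 h1 h2 h3.
rewrite kn.
case: k kn => [|[|[|[|k]]]] kn /=.
- by rewrite h0.
- by rewrite h1 ltnW // h0.
- by rewrite h2 ltnW // h1.
- have -> : (2 < n)%N by lia.
  by rewrite h3 h2 subnn (leq_trans _ kn) // h0.
have -> : (k.+3 < n)%N by lia.
have -> : (k.+4 - 3 < n)%N by lia.
have -> : (k.+4 - 4 < n)%N by lia.
have := congr1 (fun x : nat => x%:R : int) (Hr k).
move=> /= e.
have E3 : (k.+4 - 3 = k.+1)%N by lia.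
have E4 : (k.+4 - 4 = k)%N by lia.
rewrite E3 E4. move: e. rewrite !natrD. lia.
Qed.

Theorem lemma4 (n k : nat) : (k < n)%N ->
  ((1 - 2%:R *: 'X - 2%:R *: 'X^3 + 'X^4 : {poly int}) *
     \poly_(c < n) (T 2 c)%:R)`_k
  = (1 + 2%:R *: 'X^2 - 'X^3 : {poly int})`_k.
Proof.
apply: main.
- rewrite !T2F; exact: Fsmall.
- by move=> m; rewrite !T2F; apply: Frec.
Qed.
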